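(* Let $(X,d)$ be a metric space and $\pi:X\to X_0$ a fibration. For $x\in X_0$ let $d_x$ be the restriction of $d$ to the fiber $\pi^{-1}\{x\}$. Let $\mu,\nu$ be measures on $X$ with $\pi_*\mu=\pi_*\nu=\lambda$, and for $x\in X_0$ let $\mu_x,\nu_x$ be the disintegrated measures on $\pi^{-1}(x)$ (so that $\mu=\int\mu_x\,d\lambda(x)$, $\nu=\int\nu_x\,d\lambda(x)$). Then $$d_L(\mu,\nu)\le\sup_{x\in X_0} d_{L,x}(\mu_x,\nu_x),$$ where $d_{L,x}$ denotes the Lévy–Prokhorov distance on $\pi^{-1}(x)$ with respect to $d_x$.
   Context: For measures $\mu,\nu$ on a metric space $(Y,\delta)$, the Lévy–Prokhorov distance is $d_L(\mu,\nu)=\inf\{\varepsilon>0:\ \nu(A_\varepsilon)\ge\mu(A)\ \text{for all } A\subset Y\}$, with $A_\varepsilon$ the $\varepsilon$-neighborhood of $A$ for $\delta$. *)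

(* Defs.v *)
From HB Require Import structures.
From mathcomp Require Import all_boot all_order all_algebra.
From mathcomp Require Import all_classical all_reals all_analysis measurable_realfun.
Set Implicit Arguments. Unset Strict Implicit. Unset Printing Implicit Defensive.
Import Order.TTheory GRing.Theory Num.Theory.
Local Open Scope classical_set_scope.
Local Open Scope ring_scope.

Definition is_metric {R : realType} {X : Type} (d : X -> X -> R) : Prop :=
  [/\ forall x y, 0 <= d x y,
      forall x y, d x y = 0 <-> x = y,
      forall x y, d x y = d y x &
      forall x y z, d x z <= d x y + d y z].

Definition d_open {R : realType} {X : Type} (d : X -> X -> R) (U : set X) : Prop :=
  forall x, U x -> exists2 e : R, 0 < e & forall y, d x y < e -> U y.

Definition nbhd {R : realType} {X : Type} (d : X -> X -> R) (A : set X) (e : R)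
  : set X := [set y | exists2 a, A a & d a y < e].

Definition LP {R : realType} {dX : measure_display} {X : measurableType dX}
  (d : X -> X -> R) (mu nu : set X -> \bar R) : \bar R :=
  ereal_inf [set e%:E | e in [set e : R | 0 < e /\
     forall A : set X, measurable A -> (mu A <= nu (nbhd d A e))%E]].

(* Levy-Prokhorov distance on the subspace F (with the restricted metric),
   for measures on X concentrated on F: measurable subsets of F are
   the measurable sets of X contained in F, and the e-neighbourhood of
   A in (F, d|F) is nbhd d A e `&` F. *)
Definition LP_on {R : realType} {dX : measure_display} {X : measurableType dX}
  (d : X -> X -> R) (F : set X) (mu nu : set X -> \bar R) : \bar R :=
  ereal_inf [set e%:E | e in [set e : R | 0 < e /\
     forall A : set X, measurable A -> A `<=` F ->
       (mu A <= nu (nbhd d A e `&` F))%E]].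

Definition disintegration {R : realType} {dX d0 : measure_display}
  {X : measurableType dX} {X0 : measurableType d0} (pi : X -> X0)
  (lam : {measure set X0 -> \bar R}) (mu : {measure set X -> \bar R})
  (mux : X0 -> {measure set X -> \bar R}) : Prop :=
  [/\ forall x, mux x (~` (pi @^-1` [set x])) = 0%E,
      forall A : set X, measurable A -> measurable_fun [set: X0] (fun x : X0 => (mux x A : \bar R)) &
      forall A : set X, measurable A -> mu A = (\int[lam]_x mux x A)%E].

(* Main.v *)
Require Import Defs.
From HB Require Import structures.
From mathcomp Require Import all_boot all_order all_algebra.
From mathcomp Require Import all_classical all_reals all_analysis measurable_realfun.
From mathcomp Require Import lra.
Import Order.TTheory GRing.Theory Num.Theory.
Local Open Scope classical_set_scope.
Local Open Scope ring_scope.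

Lemma nbhd_open (R : realType) (X : Type) (d : X -> X -> R) (A : set X) (e : R) :
  is_metric d -> d_open d (nbhd d A e).
Proof.
move=> [d0 dE dC dT] y [a Aa day].
exists (e - d a y); first by rewrite subr_gt0.
move=> z dyz; exists a => //.
have := dT a y z; lra.
Qed.

Lemma nbhd_mono (R : realType) (X : Type) (d : X -> X -> R) (A B : set X) (e e' : R) :
  A `<=` B -> e' <= e -> nbhd d A e' `<=` nbhd d B e.
Proof.
move=> AB ee z [a Aa daz]; exists a; first exact: AB.
exact: lt_le_trans daz ee.
Qed.

Theorem lemma18p0p6 (R : realType) (dX d0 : measure_display)
  (X : measurableType dX) (X0 : measurableType d0)
  (d : X -> X -> R) (pi : X -> X0)
  (lam : {measure set X0 -> \bar R}) (mu nu : {measure set X -> \bar R})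
  (mux nux : X0 -> {measure set X -> \bar R}) :
  is_metric d ->
  (forall U : set X, d_open d U -> measurable U) ->
  measurable_fun setT pi ->
  (forall x : X0, measurable (pi @^-1` [set x])) ->
  pushforward mu pi = lam ->
  pushforward nu pi = lam ->
  disintegration pi lam mu mux ->
  disintegration pi lam nu nux ->
  (LP d mu nu <=
     ereal_sup [set LP_on d (pi @^-1` [set x]) (mux x) (nux x) | x in [set: X0]])%E.
Proof.
move=> hd hopen _ mF _ _ [mu0 mumf muint] [nu0 numf nuint].
set S := ereal_sup _.
have key : forall e : R, 0 < e -> (S < e%:E)%E -> (LP d mu nu <= e%:E)%E.
  move=> e e0 Se; apply: ereal_inf_lbound; exists e => //; split => // A mA.
  have mN : measurable (nbhd d A e) by apply: hopen; exact: nbhd_open.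
  rewrite muint // nuint //.
  apply: ge0_le_integral => //.
  - exact: mumf.
  - exact: numf.
  move=> x _.
  set F := pi @^-1` [set x].
  have : (LP_on d F (mux x) (nux x) < e%:E)%E.
    apply: le_lt_trans Se; apply: ereal_sup_ubound; by exists x.
  move=> /ereal_inf_lt [_ [e' [e'0 He'] <-] e'e]; rewrite lte_fin in e'e.
  have mAF : measurable (A `&` F) by exact: measurableI mA (mF x).
  have mCF : measurable (~` F) by exact: measurableC (mF x).
  have h1 : (mux x A <= mux x (A `&` F))%E.
    apply: (@le_trans _ _ (mux x ((A `&` F) `|` ~` F))).
      apply: le_measure; rewrite ?inE //; first exact: measurableU.
      by move=> z Az; have [Fz|nFz] := pselect (F z); [left|right].
    apply: le_trans (measureU2 _ mAF mCF) _.
    move: (mu0 x) => /eqP; rewrite eq_le => /andP[m0 _].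
    apply: le_trans (leeD2l _ m0) _; by rewrite adde0.
  apply: le_trans h1 _.
  apply: le_trans (He' _ mAF (@subIsetr _ _ _)) _.
  apply: le_measure; rewrite ?inE //.
    apply: measurableI; last exact: mF.
    by apply: hopen; exact: nbhd_open.
  move=> z [+ _]; apply: nbhd_mono; [exact: subIsetl|exact: ltW].
have S0 : (0 <= S)%E.
  have [x0 _] : exists x : X0, True by exists point.
  apply: le_trans (ereal_sup_ubound _); last by exists x0.
  apply: le_ereal_inf_tmp => _ [r [r0 _] <-]; rewrite lee_fin; exact: ltW.
case: S S0 key => [r| |] // r0 key; last by rewrite leey.
apply/lee_addgt0Pr => e e0; rewrite -EFinD; apply: key.
  by rewrite lee_fin in r0; exact: ltr_wpDl.
by rewrite lte_fin ltrDl.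
Qed.
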